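(* Let $T$ be a locally finite rooted tree with root $r$, all of whose edges are directed towards $r$, and let $B$ and $R$ be disjoint sets of leaves of $T$. Then there exists a strong blue blockage or there exists a red blockage (for $(T,B,R)$).
   Context: Edges of $T$ are ordered pairs $st$ pointing from $s$ to $t$, oriented towards the root $r$ (so every vertex other than $r$ has exactly one outgoing edge). A \emph{leaf} is a vertex with no incoming edges. Elements of $B$ are called blue, elements of $R$ red. For an edge set $X$, $V(X)$ denotes the set of vertices incident with an edge of $X$. For an edge set $X$ and vertex $v$, the \emph{accumulation} $A(v,X)$ is the number of edges of $X$ pointing to $v$ minus the number of edges of $X$ pointing away from $v$; for edge sets $X,Y$, $A(v,X,Y)=A(v,X)-A(v,Y)$. An edge set is \emph{rayless} if the subgraph it forms contains no ray. The \emph{blue flow} $b(X)$ to $X$ is the union of the edge sets of those (directed) paths starting at a blue leaf all of whose interior vertices are not incident with an edge of $X$; the \emph{red flow} $r(X)$ is defined in the same way with red leaves in place of blue leaves. A \emph{red blockage} is a rayless edge set $X$ such that $V(X)\cap B=\emptyset$ and $A(v,X,b(X))\ge 0$ for every $v\in (V(X)\cup\{r\})\setminus R$. A \emph{blue blockage} is a rayless edge set $X$ such that $V(X)\cap R=\emptyset$ and $A(v,X,r(X))\ge 0$ for every $v\in (V(X)\cup\{r\})\setminus B$; it is \emph{strong} if $A(r,X,r(X))\ge 1$. *)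

(* Defs.v *)
From mathcomp Require Import all_boot all_order all_algebra.
From mathcomp Require Import finmap.
From mathcomp Require Import boolp classical_sets cardinality.
Set Implicit Arguments. Unset Strict Implicit. Unset Printing Implicit Defensive.
Import GRing.Theory Num.Theory.
Local Open Scope classical_set_scope.

(* A rooted tree T on the vertex type V is given by its root r and the parent
   map par : V -> V.  The (directed) edges of T are the ordered pairs
   (s, par s) with s <> r, i.e. every non-root vertex has exactly one outgoing
   edge, pointing towards r.  The value par r is irrelevant (the hypotheses of
   the theorem require par r = r). *)

Section Tree.
Variables (V : choiceType) (r : V) (par : V -> V).

Definition tedge (e : V * V) : Prop := e.1 <> r /\ par e.1 = e.2.

Definition rooted_tree : Prop :=
  par r = r /\ forall v : V, exists n : nat, iter n par v = r.

(* T is locally finite: every vertex has finitely many neighbours, i.e.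
   finitely many children (the parent being unique). *)
Definition locally_finite : Prop :=
  forall v : V, finite_set [set s | s <> r /\ par s = v].

Definition leaf (v : V) : Prop := ~ exists s, tedge (s, v).

Definition verts (X : set (V * V)) : set V :=
  [set v | exists e, X e /\ (v = e.1 \/ v = e.2)].

Definition accum (v : V) (X : set (V * V)) : int :=
  (#|` fset_set [set s | X (s, v)]|%:Z - #|` fset_set [set t | X (v, t)]|%:Z)%R.

Definition accum2 (v : V) (X Y : set (V * V)) : int :=
  (accum v X - accum v Y)%R.

Definition rayless (X : set (V * V)) : Prop :=
  ~ exists f : nat -> V, injective f /\
      forall i, X (f i, f i.+1) \/ X (f i.+1, f i).

(* the L-flow to X (L = B gives the blue flow b(X), L = R the red flow r(X)):
   the union of the edge sets of the directed paths
   l = v_0, v_1 = par v_0, ..., v_{n+1} = par v_n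
   starting at a leaf l in L whose interior vertices v_1, ..., v_n are not in
   V(X). The edge (v_n, v_{n+1}) belongs to such a path. *)
Definition flow (L : set V) (X : set (V * V)) : set (V * V) :=
  [set e | exists (l : V) (n : nat),
     L l /\ leaf l /\ iter n par l <> r /\
     e = (iter n par l, par (iter n par l)) /\
     forall i : nat, (0 < i <= n)%N -> ~ verts X (iter i par l)].

Definition red_blockage (B R : set V) (X : set (V * V)) : Prop :=
  X `<=` tedge /\ rayless X /\ verts X `&` B = set0 /\
  forall v, (verts X `|` [set r]) v -> ~ R v ->
    (0 <= accum2 v X (flow B X))%R.

Definition blue_blockage (B R : set V) (X : set (V * V)) : Prop :=
  X `<=` tedge /\ rayless X /\ verts X `&` R = set0 /\
  forall v, (verts X `|` [set r]) v -> ~ B v ->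
    (0 <= accum2 v X (flow R X))%R.

Definition strong_blue_blockage (B R : set V) (X : set (V * V)) : Prop :=
  blue_blockage B R X /\ (1 <= accum2 r X (flow R X))%R.

End Tree.

(* Main.v *)
Require Import Defs.
From mathcomp Require Import all_boot all_order all_algebra.
From mathcomp Require Import finmap.
From mathcomp Require Import boolp classical_sets cardinality.
From mathcomp Require Import zify.
Set Implicit Arguments. Unset Strict Implicit. Unset Printing Implicit Defensive.
Local Open Scope classical_set_scope.

Section Gen.
Variables (V : choiceType) (r : V) (par : V -> V).
Hypothesis locfin : locally_finite r par.

Definition ch (v : V) : set V := [set s | s <> r /\ par s = v].
Definition cnt (v : V) (A : set V) : nat := #|` fset_set (ch v `&` A)|.

Lemma fcard_sub (A B : set V) : finite_set B -> A `<=` B ->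
  (#|` fset_set A| <= #|` fset_set B|)%N.
Proof.
move=> fB AB; have fA := sub_finite_set AB fB.
by apply: fsubset_leq_card; rewrite -fset_set_sub.
Qed.

Lemma cnt_mono v (A B : set V) : (forall x, ch v x -> A x -> B x) ->
  (cnt v A <= cnt v B)%N.
Proof.
move=> H; apply: fcard_sub; first exact: finite_setIl (locfin v).
by move=> x [cx Ax]; split => //; apply: H.
Qed.

Lemma card_pos (A : set V) : (0 < #|` fset_set A|)%N -> exists x, A x.
Proof.
move=> H; apply: contrapT => nx.
have A0 : A = set0 by apply/seteqP; split => x //= Ax; apply: nx; exists x.
by move: H; rewrite A0 fset_set0 cardfs0.
Qed.

Lemma cnt_pos v A : (0 < cnt v A)%N -> exists x, ch v x /\ A x.
Proof. by move/card_pos => [x [? ?]]; exists x. Qed.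

Lemma card_le1 (A : set V) (x : V) : A `<=` [set x] -> (#|` fset_set A| <= 1)%N.
Proof.
move=> H; have := fcard_sub (finite_set1 x) H.
by rewrite fset_set1 cardfs1.
Qed.

Section Ops.
Variables (O1 O2 : set V).

Fixpoint Pst (S : set V) (n : nat) : set V :=
  match n with
  | 0 => set0
  | k.+1 => [set v | v <> r /\ (O1 v \/ (~ O2 v /\ ((cnt v (~` S)).+1 <= cnt v (Pst S k))%N))]
  end.

Definition Push (S : set V) : set V := [set v | exists n, Pst S n v].

Definition Phi (S : set V) : set V :=
  [set v | O1 v \/ (~ O2 v /\ (cnt v (~` S) <= cnt v (Push S))%N)].

Definition Zs : set V := [set v | exists S, S `<=` Phi S /\ S v].

Lemma Pst_S S n : Pst S n `<=` Pst S n.+1.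
Proof.
elim: n => [|n IH] v //=.
move=> [vr [H|[H1 H2]]]; split => //; [by left|right; split => //].
apply: leq_trans H2 _; apply: cnt_mono => x _; exact: IH.
Qed.

Lemma Pst_le S n m : (n <= m)%N -> Pst S n `<=` Pst S m.
Proof.
move=> /subnK <-; elim: (m - n)%N => [|k IH] v H //=.
by apply: Pst_S; apply: IH.
Qed.

Lemma Pst_mono S S' n : S `<=` S' -> Pst S n `<=` Pst S' n.
Proof.
move=> SS; elim: n => [|n IH] v //= [vr [H|[H1 H2]]]; split => //; [by left|right; split => //].
apply: leq_trans _ (leq_trans H2 _).
- rewrite ltnS; apply: cnt_mono => x _ /= nS' Sx; apply: nS'; exact: SS.
- by apply: cnt_mono => x _; apply: IH.
Qed.

Lemma Push_mono S S' : S `<=` S' -> Push S `<=` Push S'.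
Proof. by move=> SS v [n H]; exists n; apply: Pst_mono H. Qed.

Lemma Push_nr S v : Push S v -> v <> r.
Proof. by case=> -[|n] //= []. Qed.

Lemma Push_O1 S v : v <> r -> O1 v -> Push S v.
Proof. by move=> vr o; exists 1%N; split => //; left. Qed.

Lemma fin_stage S (A : set V) : finite_set A -> A `<=` Push S ->
  exists N, A `<=` Pst S N.
Proof.
move=> fA AP.
have : forall x, x \in fset_set A -> exists n, Pst S n x.
  by move=> x; rewrite in_fset_set // inE => /AP.
have key : forall s : seq V, (forall x, x \in s -> exists n, Pst S n x) ->
   exists N, forall x, x \in s -> Pst S N x.
  elim => [|a s IH] H; first by exists 0%N.
  have [na Ha] := H a (mem_head _ _).
  have [N HN] := IH (fun x xs => H x (@mem_behead _ (a :: s) x xs)).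
  exists (maxn na N) => x; rewrite inE => /orP [/eqP ->|xs].
    by apply: Pst_le (leq_maxl _ _) _ Ha.
  by apply: Pst_le (leq_maxr _ _) _ (HN x xs).
move=> H; have [N HN] := key (fset_set A) H.
exists N => x Ax; apply: HN; by rewrite in_fset_set // inE.
Qed.

Lemma Push_closed S v : v <> r -> ~ O2 v ->
  ((cnt v (~` S)).+1 <= cnt v (Push S))%N -> Push S v.
Proof.
move=> vr no Hc.
have [N HN] := @fin_stage S (ch v `&` Push S) (finite_setIl _ (locfin v)) (fun x => @proj2 _ _).
exists N.+1; split => //; right; split => //.
apply: leq_trans Hc _; apply: cnt_mono => x cx Px; exact: HN.
Qed.

Lemma Pst_min S n v : Pst S n v -> exists k, Pst S k.+1 v /\ ~ Pst S k v.
Proof.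
elim: n => [|n IH] //= H.
have [Hn|Hn] := pselect (Pst S n v); first exact: IH.
by exists n.
Qed.

Lemma Phi_mono S S' : S `<=` S' -> Phi S `<=` Phi S'.
Proof.
move=> SS v [H|[H1 H2]]; [by left|right; split => //].
apply: leq_trans _ (leq_trans H2 _).
- apply: cnt_mono => x _ /= nS' Sx; apply: nS'; exact: SS.
- by apply: cnt_mono => x _; apply: Push_mono.
Qed.

Lemma Z_post : Zs `<=` Phi Zs.
Proof.
move=> v [S [SP Sv]]; apply: (Phi_mono (S := S)); last exact: SP.
by move=> x Sx; exists S.
Qed.

Lemma Z_coind S : S `<=` Phi S -> S `<=` Zs.
Proof. by move=> H v Sv; exists S. Qed.

Lemma Push_Z : Push Zs `<=` Zs.
Proof.
move=> v0 Pv0; apply: (@Z_coind (Zs `|` Push Zs)); last by right.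
move=> v [vZ|vP].
  by apply: Phi_mono (Z_post vZ) => x; left.
have [n Hn] := vP.
have [k [[vr [H|[H1 H2]]] _]] := Pst_min Hn; first by left.
right; split => //.
apply: (@leq_trans (cnt v (~` Zs))).
  by apply: cnt_mono => x _ /= nx zx; apply: nx; left.
apply: leq_trans (ltnW H2) _.
apply: (@leq_trans (cnt v (Push Zs))).
  by apply: cnt_mono => x _ Hx; exists k.
by apply: cnt_mono => x _; apply: Push_mono => y Hy; left.
Qed.

Lemma O1_Z v : O1 v -> Zs v.
Proof. by move=> o; exists [set v]; split => // x ->; left. Qed.

Lemma O2_notZ v : ~ O1 v -> O2 v -> ~ Zs v.
Proof. by move=> n1 o2 /Z_post [//|[]]. Qed.

End Ops.

Definition W (O1 O2 : set V) := [set x | x <> r /\ ~ Push O2 O1 (Zs O2 O1) x].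

Lemma dualQ (O1 O2 : set V) c : c <> r -> ~ Zs O2 O1 c -> Push O1 O2 (W O1 O2) c.
Proof.
move=> cr nZ; apply: contrapT => nP; apply: nZ.
pose S := [set c | c <> r /\ ~ Push O1 O2 (W O1 O2) c] `|` Zs O2 O1.
apply: (@Z_coind O2 O1 S); last by left.
move=> x [[xr nPx]|xZ]; last first.
  by apply: Phi_mono (Z_post xZ) => y; right.
have [o2|no2] := pselect (O2 x); first by left.
have no1 : ~ O1 x by move=> o1; apply: nPx; apply: Push_O1.
right; split => //.
have le1 : (cnt x (Push O1 O2 (W O1 O2)) <= cnt x (~` W O1 O2))%N.
  rewrite leqNgt; apply/negP => Hlt; apply: nPx; exact: Push_closed.
apply: (@leq_trans (cnt x (Push O1 O2 (W O1 O2)))).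
  apply: cnt_mono => y [yr _] /= nS; apply: contrapT => nP2; apply: nS; left; by split.
apply: leq_trans le1 _.
apply: (@leq_trans (cnt x (Push O2 O1 (Zs O2 O1)))).
  by apply: cnt_mono => y [yr _] /= nW; apply: contrapT => nP2; apply: nW; split.
by apply: cnt_mono => y _; apply: Push_mono => z zZ; right.
Qed.

Lemma dualD (O1 O2 : set V) : W O1 O2 `<=` Zs O1 O2.
Proof.
apply: Z_coind => x [xr nP].
have [o1|no1] := pselect (O1 x); first by left.
have no2 : ~ O2 x by move=> o2; apply: nP; apply: Push_O1.
right; split => //.
have le1 : (cnt x (Push O2 O1 (Zs O2 O1)) <= cnt x (~` Zs O2 O1))%N.
  rewrite leqNgt; apply/negP => Hlt; apply: nP; exact: Push_closed.
apply: (@leq_trans (cnt x (Push O2 O1 (Zs O2 O1)))).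
  by apply: cnt_mono => y [yr _] /= nW; apply: contrapT => nP'; apply: nW; split.
apply: leq_trans le1 _.
by apply: cnt_mono => y [yr _] nZ; apply: dualQ.
Qed.

Lemma dual_cnt (O1 O2 : set V) v :
  (cnt v (~` Zs O2 O1) <= cnt v (Push O1 O2 (Zs O1 O2)))%N.
Proof.
apply: cnt_mono => y [yr _] nZ.
by apply: Push_mono (dualD (O1:=O1) (O2:=O2)) _ _; apply: dualQ.
Qed.

End Gen.


Section Blk.
Variables (V : choiceType) (r : V) (par : V -> V).
Hypothesis rt : rooted_tree r par.
Hypothesis locfin : locally_finite r par.
Variables (O1 O2 : set V).
Hypothesis O1l : O1 `<=` leaf r par.
Hypothesis O2l : O2 `<=` leaf r par.
Hypothesis O12 : O1 `&` O2 = set0.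

Let Z := Zs r par O1 O2.
Let P := Pst r par O1 O2 Z.
Let Pu := Push r par O1 O2 Z.

Definition Xg : set (V * V) :=
  [set e | e.1 <> r /\ par e.1 = e.2 /\ Pu e.1 /\ (Z e.2 \/ e.2 = r) /\
           (Pu e.2 -> exists m, P m e.1 /\ ~ P m e.2)].

Lemma no12 v : O1 v -> O2 v -> False.
Proof. by move=> a b; have : (O1 `&` O2) v by []; rewrite O12. Qed.

Lemma Xg_tedge : Xg `<=` tedge r par.
Proof. by move=> e [? [? _]]. Qed.

Lemma iter_r n : iter n par r = r.
Proof. by elim: n => //= n ->; case: rt. Qed.

Lemma iter_after l i n : (i <= n)%N -> iter i par l = r -> iter n par l = r.
Proof.
by move=> /subnK <- H; rewrite iterD H iter_r.
Qed.

Lemma cnt_pos_of v A x : ch r par v x -> A x -> (0 < cnt r par v A)%N.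
Proof.
move=> cx Ax.
apply: (@leq_trans #|` fset_set [set x]|); first by rewrite fset_set1 cardfs1.
rewrite /cnt; apply: fcard_sub; first exact: finite_setIl (locfin v).
by move=> y ->; split.
Qed.

Lemma edge_exists w : Z w -> ~ O1 w -> (exists c, ch r par w c /\ ~ Z c) ->
  exists c, Xg (c, w).
Proof.
move=> Zw n1 [c [cw nZc]].
have [//|[_ Hc]] := Z_post locfin Zw.
have pos : (0 < cnt r par w (~` Z))%N.
  exact: cnt_pos_of cw nZc.
have [Pw|nPw] := pselect (Pu w).
  have [n Hn] := Pw.
  have [k [[wr [//|[_ Hk]]] nk]] := Pst_min Hn.
  have [c' [[c'r pc'] Pc']] := cnt_pos (leq_ltn_trans (leq0n _) Hk).
  exists c'; split => //; split => //; split; first by exists k.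
  by split; [left|move=> _; exists k].
have [c' [[c'r pc'] Pc']] := cnt_pos (leq_trans pos Hc).
exists c'; split => //; split => //; split => //.
by split; [left|].
Qed.

Lemma ex_switch (Q : nat -> Prop) n : ~ Q 0%N -> Q n -> exists j, (j < n)%N /\ ~ Q j /\ Q j.+1.
Proof.
elim: n => [|n IH] n0 Qn; first by [].
have [Qm|nQm] := pselect (Q n).
  by have [j [jn H]] := IH n0 Qm; exists j; split => //; apply: ltnW.
by exists n.
Qed.

Lemma flow_in s v : flow r par O2 Xg (s, v) -> ch r par v s /\ ~ Z s.
Proof.
move=> [l [n [O2l' [lf [nr [[-> ->] nv]]]]]].
split; first by split.
move=> Zs'.
have nZl : ~ Z l.
  move=> Zl; have [o1|[nO2 _]] := Z_post locfin Zl; first exact: no12 o1 O2l'.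
  exact: nO2 O2l'.
have [j [jn [nZj Zj1]]] := @ex_switch (fun i => Z (iter i par l)) n nZl Zs'.
have n1 : ~ O1 (iter j.+1 par l).
  move=> /O1l; apply; exists (iter j par l); split => //=.
  by move=> H; apply: nr; apply: (iter_after (i:=j)) => //; apply: ltnW.
have ex : exists c, ch r par (iter j.+1 par l) c /\ ~ Z c.
  exists (iter j par l); split => //; split => //.
  by move=> H; apply: nr; apply: (iter_after (i:=j)) => //; apply: ltnW.
have [c Xc] := edge_exists Zj1 n1 ex.
apply: (nv j.+1); first by rewrite ltn0Sn.
by exists (c, iter j.+1 par l); split => //; right.
Qed.

Lemma no_chain n : forall g : nat -> V,
  (forall k, exists m, P m (g k.+1) /\ ~ P m (g k)) -> ~ P n (g 0%N).
Proof.
elim/ltn_ind: n => n IH g Hg Pn.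
have [m [Pm nPm]] := Hg 0%N.
have mn : (m < n)%N.
  rewrite ltnNge; apply/negP => nm; apply: nPm; exact: Pst_le nm _ Pn.
exact: (IH m mn (fun k => g k.+1) (fun k => Hg k.+1) Pm).
Qed.

Lemma Xg_rayless : rayless Xg.
Proof.
move=> [f [finj Hf]].
have [N HN] : exists N, Xg (f N.+1, f N).
  apply: contrapT => nex.
  have up : forall i, Xg (f i, f i.+1).
    by move=> i; case: (Hf i) => // H; exfalso; apply: nex; exists i.
  have fi : forall i, f i = iter i par (f 0%N).
    elim => [|i IH] //=; rewrite -IH; by have [_ [-> _]] := up i.
  case: rt => _ /(_ (f 0%N)) [n Hn].
  by have [+ _] := up n; rewrite fi Hn.
have down : forall k, Xg (f (k + N).+1, f (k + N)).
  elim => [|k IH] //.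
  case: (Hf (k.+1 + N)) => // H.
  have [_ [p1 _]] := IH; have [_ [p2 _]] := H.
  simpl in p1, p2; rewrite addSn in p2.
  have : f (k + N).+2 = f (k + N) by rewrite -p2 p1.
  move/finj => E; exfalso; move: E; lia.
pose g k := f (k.+1 + N).
have Pg : forall k, Pu (g k) by move=> k; have [_ [_ [H _]]] := down k.
have Hg : forall k, exists m, P m (g k.+1) /\ ~ P m (g k).
  move=> k; have [_ [_ [_ [_ H]]]] := down k.+1; exact: H (Pg k).
have [n Pn] := Pg 0%N.
exact: no_chain Hg Pn.
Qed.

Lemma Pu_nO2 v : Pu v -> ~ O2 v.
Proof.
move=> [n Hn]; have [k [[_ [o1|[no2 _]]] _]] := Pst_min Hn => // o2.
exact: no12 o1 o2.
Qed.

Lemma Z_nO2 v : Z v -> ~ O2 v.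
Proof. by move=> /(Z_post locfin) [o1 o2|[]//]; exact: no12 o1 o2. Qed.

Lemma Xg_verts_O2 : verts Xg `&` O2 = set0.
Proof.
apply/seteqP; split=> v //= [[e [Xe [->| ->]]] o2].
  by have [_ [_ [Pe _]]] := Xe; exact: Pu_nO2 Pe o2.
have [e1r [pe [_ [[Ze|er] _]]]] := Xe; first exact: Z_nO2 Ze o2.
by apply: (O2l o2); exists e.1; rewrite /tedge /=; split.
Qed.

Lemma inX_ge v A : (forall x, ch r par v x -> A x -> Xg (x, v)) ->
  (cnt r par v A <= #|` fset_set [set s | Xg (s, v)]|)%N.
Proof.
move=> H; rewrite /cnt; apply: fcard_sub.
  apply: sub_finite_set (locfin v) => s [sr [ps _]]; by split.
by move=> x [cx Ax]; apply: H.
Qed.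

Lemma outX_le v : (#|` fset_set [set t | Xg (v, t)]| <= 1)%N.
Proof. by apply: (@card_le1 _ _ (par v)) => t [_ [/= <- _]]. Qed.

Lemma outX_0 v : ~ (Pu v /\ v <> r) -> #|` fset_set [set t | Xg (v, t)]| = 0%N.
Proof.
move=> H; have -> : [set t | Xg (v, t)] = set0.
  by apply/seteqP; split => t //= [vr [_ [Pv _]]]; apply: H.
by rewrite fset_set0 cardfs0.
Qed.

Lemma inF_le v : (#|` fset_set [set s | flow r par O2 Xg (s, v)]| <= cnt r par v (~` Z))%N.
Proof.
rewrite /cnt; apply: fcard_sub; first exact: finite_setIl (locfin v).
by move=> s /flow_in.
Qed.

Lemma outF_r : #|` fset_set [set t | flow r par O2 Xg (r, t)]| = 0%N.
Proof.
have -> : [set t | flow r par O2 Xg (r, t)] = set0.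
  apply/seteqP; split => t //= [l [n [_ [_ [nr [[E _] _]]]]]].
  by apply: nr.
by rewrite fset_set0 cardfs0.
Qed.

Lemma Xg_vert v : verts Xg v -> v <> r -> ~ O1 v ->
  (0 <= accum2 v Xg (flow r par O2 Xg))%R.
Proof.
move=> vX vr n1; rewrite /accum2 /accum.
have iF := inF_le v.
have oX := outX_le v.
set a := #|` fset_set [set s | Xg (s, v)]| in oX iF *.
set b := #|` fset_set [set t | Xg (v, t)]| in oX iF *.
set c := #|` fset_set [set s | flow r par O2 Xg (s, v)]| in oX iF *.
set d := #|` fset_set [set t | flow r par O2 Xg (v, t)]| in oX iF *.
suff : (b + c <= a)%N by move=> H; lia.
have [Pv|nPv] := pselect (Pu v).
  have [n Hn] := Pv.
  have [k [[_ [//|[_ Hk]]] nk]] := Pst_min Hn.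
  have Zv : Z v by apply: (Push_Z locfin).
  have : (cnt r par v (Pst r par O1 O2 Z k) <= a)%N.
    apply: inX_ge => x [xr px] Px; split => //; split => //; split; first by exists k.
    by rewrite /=; split; [left|move=> _; exists k; split].
  have Hk2 : ((cnt r par v (~` Z)).+1 <= cnt r par v (Pst r par O1 O2 Z k))%N := Hk.
  lia.
have b0 : b = 0%N by apply: outX_0 => -[].
case: vX => e [Xe [ve|ve]].
  by exfalso; apply: nPv; have [_ [_ [H _]]] := Xe; rewrite ve.
have [_ [_ [_ [[Ze|er] _]]]] := Xe; last by rewrite -ve in er.
rewrite -ve in Ze.
have [//|[_ Hc]] := Z_post locfin Ze.
have : (cnt r par v Pu <= a)%N.
  apply: inX_ge => x [xr px] Px; split => //; split => //; split => //.
  by rewrite /=; split; [left|].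
have Hc2 : (cnt r par v (~` Z) <= cnt r par v Pu)%N := Hc.
lia.
Qed.

Lemma Xg_root : ((cnt r par r Pu)%:Z - (cnt r par r (~` Z))%:Z <=
   accum2 r Xg (flow r par O2 Xg))%R.
Proof.
rewrite /accum2 /accum outF_r.
rewrite (@outX_0 r); last by case.
have iF := inF_le r.
have : (cnt r par r Pu <= #|` fset_set [set s | Xg (s, r)]|)%N.
  apply: inX_ge => x [xr px] Px; split => //; split => //; split => //.
  by rewrite /=; split; [right|move=> /Push_nr].
lia.
Qed.
End Blk.


Lemma fin_ineq0 (p n p' n' : nat) (x : int) : (n' <= p)%N -> (p <= n)%N ->
  (n <= p')%N -> (p'%:Z - n'%:Z <= x)%R -> (0 <= x)%R.
Proof. move=> *; lia. Qed.
Lemma fin_ineq1 (p n : nat) (x : int) : (n < p)%N ->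
  (p%:Z - n%:Z <= x)%R -> (1 <= x)%R.
Proof. move=> *; lia. Qed.
Lemma fin_ineq2 (p n : nat) (x : int) : (n < p)%N ->
  (p%:Z - n%:Z <= x)%R -> (0 <= x)%R.
Proof. move=> *; lia. Qed.

Unset Implicit Arguments.

Theorem theorem1p1 (V : choiceType) (r : V) (par : V -> V)
  (B R : set V) :
  rooted_tree r par ->
  locally_finite r par ->
  B `<=` leaf r par -> R `<=` leaf r par -> B `&` R = set0 ->
  (exists X : set (V * V), strong_blue_blockage r par B R X) \/
  (exists X : set (V * V), red_blockage r par B R X).
Proof.
move=> rt lf BL RL BR.
have RB : R `&` B = set0 by rewrite setIC.
have d1 := dual_cnt lf B R r.
have d2 := dual_cnt lf R B r.
have rB := Xg_root rt lf BL BR.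
have rR := Xg_root rt lf RL RB.
have [H|H] := leqP (cnt r par r (Push r par B R (Zs r par B R)))
                    (cnt r par r (~` Zs r par B R)).
  right; exists (Xg r par R B).
  split; first exact: Xg_tedge.
  split; first exact: Xg_rayless.
  split; first exact: Xg_verts_O2.
  move=> v vX nR.
  have [->|vr] := pselect (v = r).
    exact: fin_ineq0 d1 H d2 rR.
  case: vX => [vX|vE]; last by exfalso; apply: vr.
  exact: (Xg_vert rt lf RL RB vX vr nR).
left; exists (Xg r par B R); split; last first.
  exact: fin_ineq1 H rB.
split; first exact: Xg_tedge.
split; first exact: Xg_rayless.
split; first exact: Xg_verts_O2.
move=> v vX nB.
have [->|vr] := pselect (v = r).
  exact: fin_ineq2 H rB.
case: vX => [vX|vE]; last by exfalso; apply: vr.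
exact: (Xg_vert rt lf BL BR vX vr nB).
Qed.
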